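(* Let $G=(V,w,m)$ be a locally finite measured weighted graph with $D:=\operatorname{Deg}_{\max}<\infty$, $q:=q_{\min}>0$ and $\kappa(x,y)\ge0$ for all $x\ne y\in V$. Let $f:V\to\mathbb{R}$ be harmonic ($\Delta f=0$) with $\|\nabla f\|_\infty=1$. Let $\varepsilon\in(0,q/(4D))$ and let $x_0\neq y_0$ satisfy $f(x_0)-f(y_0)\ge d(x_0,y_0)-\varepsilon$. Then there exist $x'\in B_1(x_0)$ and $y'\in B_1(y_0)$ such that $$f(x')-f(y')>d(x',y')-\varepsilon\cdot\frac{10D}{q}\qquad\text{and}\qquad d(x',y')>d(x_0,y_0).$$
   Context: A measured weighted graph $G=(V,w,m)$: countable $V$, symmetric $w:V\times V\to[0,\infty)$ vanishing on the diagonal, $m:V\to(0,\infty)$; $x\sim y$ iff $w(x,y)>0$; locally finite means each vertex has finitely many neighbours. $q(x,y):=w(x,y)/m(x)$, $\Delta f(x):=\sum_y q(x,y)(f(y)-f(x))$, $\operatorname{Deg}_{\max}:=\sup_x\sum_y q(x,y)$, $q_{\min}:=\inf_{x\sim y}q(x,y)$. $d$ is the combinatorial graph distance and $B_1(x)=\{z:d(x,z)\le1\}$. For $x\ne y$, $\nabla_{xy}f:=(f(x)-f(y))/d(x,y)$, $\|\nabla f\|_\infty:=\sup_{x\sim y}\nabla_{xy}f$, and the Ollivier curvature is $\kappa(x,y):=\inf\{\nabla_{xy}\Delta f: \nabla_{yx}f=1,\ \|\nabla f\|_\infty=1\}$. *)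

(* Defs.v *)
From HB Require Import structures.
From mathcomp Require Import all_boot all_order all_algebra.
From mathcomp Require Import all_classical all_reals ereal.
Set Implicit Arguments. Unset Strict Implicit. Unset Printing Implicit Defensive.
Import Order.TTheory GRing.Theory Num.Theory.
Local Open Scope classical_set_scope.
Local Open Scope ring_scope.

Section Graph.
Variables (R : realType) (V : countType) (w : V -> V -> R) (m : V -> R).

Definition is_mwgraph : Prop :=
  (forall x y, 0 <= w x y) /\ (forall x y, w x y = w y x) /\
  (forall x, w x x = 0) /\ (forall x, 0 < m x).

Definition adj (x y : V) : Prop := 0 < w x y.

Definition nbhd (x : V) : set V := [set y | adj x y].

Definition locally_finite : Prop := forall x, finite_set (nbhd x).

Definition qq (x y : V) : R := w x y / m x.

(* Laplacian: sum over neighbours (finite by local finiteness) *)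
Definition Lap (f : V -> R) (x : V) : R :=
  \sum_(y \in nbhd x) qq x y * (f y - f x).

Definition Deg (x : V) : R := \sum_(y \in nbhd x) qq x y.

Definition Deg_max : \bar R := ereal_sup [set (Deg x)%:E | x in [set: V]].

Definition q_min : \bar R :=
  ereal_inf [set (qq xy.1 xy.2)%:E | xy in [set xy : V * V | adj xy.1 xy.2]].

Inductive walk (x : V) : V -> nat -> Prop :=
| walk0 : walk x x 0
| walkS y z n : walk x y n -> adj y z -> walk x z n.+1.

(* combinatorial graph distance, +oo if no walk *)
Definition dist (x y : V) : \bar R :=
  ereal_inf [set (n%:R)%:E | n in [set n | walk x y n]].

Definition ball1 (x : V) : set V := [set z | (dist x z <= 1)%E].

Definition grad (f : V -> R) (x y : V) : \bar R :=
  ((f x - f y)%:E / dist x y)%E.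

Definition grad_norm (f : V -> R) : \bar R :=
  ereal_sup [set grad f xy.1 xy.2 | xy in [set xy : V * V | adj xy.1 xy.2]].

Definition kappa (x y : V) : \bar R :=
  ereal_inf [set grad (Lap f) x y | f in
    [set f : V -> R | grad f y x = 1%E /\ grad_norm f = 1%E]].

End Graph.

(* Main.v *)
Require Import Defs.
From HB Require Import structures.
From mathcomp Require Import all_boot all_order all_algebra.
From mathcomp Require Import all_classical all_reals ereal.
From mathcomp Require Import ring lra zify.
Import Order.TTheory GRing.Theory Num.Theory.
Local Open Scope classical_set_scope.
Local Open Scope ring_scope.

Module LHelpers.
Set Implicit Arguments. Unset Strict Implicit. Unset Printing Implicit Defensive.
Section G.
Variables (R : realType) (V : countType) (w : V -> V -> R).
Hypothesis wsym : forall x y, w x y = w y x.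
Hypothesis wdiag : forall x, w x x = 0.

Lemma adj_sym x y : adj w x y -> adj w y x.
Proof. by rewrite /adj wsym. Qed.

Lemma adj_neq x y : adj w x y -> x <> y.
Proof. by move=> h e; subst; move: h; rewrite /adj wdiag ltxx. Qed.

Lemma walk_cons x y z k : adj w x y -> walk w y z k -> walk w x z k.+1.
Proof.
move=> hxy h; elim: h => [|u v j _ IH huv].
- exact: (walkS (walk0 w x) hxy).
- exact: walkS IH huv.
Qed.

Lemma walk_rev x y k : walk w x y k -> walk w y x k.
Proof.
elim=> [|u v j _ IH huv]; first exact: walk0.

exact: walk_cons (adj_sym huv) IH.
Qed.

Lemma walk_cat x y z j k : walk w x y j -> walk w y z k -> walk w x z (j + k).
Proof.
move=> hj h; elim: h => [|u v i _ IH huv]; first by rewrite addn0.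
by rewrite addnS; exact: walkS IH huv.
Qed.

Lemma walk1 x y : adj w x y -> walk w x y 1.
Proof. move=> h; exact: walkS (walk0 w x) h. Qed.

Lemma walk0E x y : walk w x y 0 -> x = y.
Proof. by move=> h; inversion h. Qed.

Lemma walkSE x y k : walk w x y k.+1 -> exists z, walk w x z k /\ adj w z y.
Proof. move=> h; inversion h; subst; by exists y0. Qed.

Definition conn x y := exists k, walk w x y k.

Lemma conn_exP x y : conn x y -> exists k, `[< walk w x y k >].
Proof. by case=> k hk; exists k; apply/asboolP. Qed.

Definition dN x y : nat :=
  match pselect (conn x y) with
  | left h => ex_minn (conn_exP h)
  | right _ => 0%N end.

Lemma dN_walk x y : conn x y -> walk w x y (dN x y).
Proof.
rewrite /dN; case: pselect => // h _.
by case: ex_minnP => k /asboolP.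
Qed.

Lemma dN_min x y k : walk w x y k -> (dN x y <= k)%N.
Proof.
move=> hk; rewrite /dN; case: pselect => [h|h]; last by exfalso; apply: h; exists k.
case: ex_minnP => j _ hmin; apply: hmin; exact/asboolP.
Qed.

Lemma conn_refl x : conn x x. Proof. by exists 0%N; exact: walk0. Qed.
Lemma conn_sym x y : conn x y -> conn y x.
Proof. by case=> k h; exists k; exact: walk_rev. Qed.
Lemma conn_trans x y z : conn x y -> conn y z -> conn x z.
Proof. by case=> j h1 [k h2]; exists (j + k)%N; exact: walk_cat h1 h2. Qed.
Lemma conn_adj x y : adj w x y -> conn x y.
Proof. by move=> h; exists 1%N; exact: walk1. Qed.

Lemma dN_sym x y : dN x y = dN y x.
Proof.
case: (pselect (conn x y)) => h.
- apply/eqP; rewrite eqn_leq; apply/andP; split.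
  + apply: dN_min; apply: walk_rev; apply: dN_walk; exact: conn_sym.
  + apply: dN_min; apply: walk_rev; exact: dN_walk.
- have h' : ~ conn y x by move=> /conn_sym.
  rewrite /dN; case: pselect => // ?; case: pselect => //.
Qed.

Lemma dN_tri x y z : conn x y -> conn y z -> (dN x z <= dN x y + dN y z)%N.
Proof. move=> h1 h2; apply: dN_min; apply: walk_cat; exact: dN_walk. Qed.

Lemma dN0 x : dN x x = 0%N.
Proof. by apply/eqP; rewrite -leqn0; apply: dN_min; exact: walk0. Qed.

Lemma dN_adj x y : adj w x y -> dN x y = 1%N.
Proof.
move=> h; apply/eqP; rewrite eqn_leq; apply/andP; split.
  by apply: dN_min; exact: walk1.
rewrite lt0n; apply/eqP => e.
have := dN_walk (conn_adj h); rewrite e => /walk0E; exact: adj_neq h.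
Qed.

Lemma dN_eq0 x y : conn x y -> dN x y = 0%N -> x = y.
Proof. by move=> h e; have := dN_walk h; rewrite e => /walk0E. Qed.

Lemma dist_dN x y : conn x y -> dist w x y = (dN x y)%:R%:E.
Proof.
move=> h; apply/eqP; rewrite eq_le; apply/andP; split.
- apply: ereal_inf_lbound; exists (dN x y) => //; exact: dN_walk.
- apply: le_ereal_inf_tmp => _ [k hk <-]; rewrite lee_fin ler_nat; exact: dN_min.
Qed.

Lemma dist_nconn x y : ~ conn x y -> dist w x y = +oo%E.
Proof.
move=> h; apply/eqP; rewrite eq_le leey /=.
by apply: le_ereal_inf_tmp => z [k hk <-]; exfalso; apply: h; exists k.
Qed.

Lemma lip_walk (g : V -> R) : (forall u v, adj w u v -> g u - g v <= 1) ->
  forall x y k, walk w x y k -> g y - g x <= k%:R.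
Proof.
move=> hg x y k; elim=> [|u v j _ IH huv]; first by rewrite subrr.
have h1 := hg _ _ (adj_sym huv); rewrite -addn1 natrD; lra.
Qed.

Lemma lip_dN (g : V -> R) : (forall u v, adj w u v -> g u - g v <= 1) ->
  forall x y, conn x y -> g x - g y <= (dN x y)%:R.
Proof.
move=> hg x y h; rewrite dN_sym; apply: lip_walk => //.
apply: dN_walk; exact: conn_sym.
Qed.

End G.

Section MinList.
Variable R : realType.
Lemma foldr_min_le0 (d : R) l : foldr Num.min d l <= d.
Proof. by elim: l => //= a l IH; rewrite ge_min IH orbT. Qed.
Lemma foldr_min_le (d : R) l z : z \in l -> foldr Num.min d l <= z.
Proof.
elim: l => //= a l IH; rewrite in_cons => /orP [/eqP ->|h]; first by rewrite ge_min lexx.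
by rewrite ge_min IH // orbT.
Qed.
Lemma le_foldr_min (r d : R) l : r <= d -> (forall z, z \in l -> r <= z) ->
  r <= foldr Num.min d l.
Proof.
move=> hd; elim: l => //= a l IH h; rewrite le_min h ?mem_head // IH //.
by move=> z hz; apply: h; rewrite in_cons hz orbT.
Qed.
End MinList.
End LHelpers.
Import LHelpers.
Unset Implicit Arguments. Set Strict Implicit.

Theorem lemma2p3 (R : realType) (V : countType) (w : V -> V -> R) (m : V -> R)
  (D q eps : R) (f : V -> R) (x0 y0 : V) :
  is_mwgraph w m -> locally_finite w ->
  Deg_max w m = D%:E -> q_min w m = q%:E -> 0 < q ->
  (forall x y, x <> y -> (0 <= kappa w m x y)%E) ->
  (forall x, Lap w m f x = 0) -> grad_norm w f = 1%E ->
  0 < eps -> eps < q / (4 * D) ->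
  x0 <> y0 -> ((f x0 - f y0)%:E >= dist w x0 y0 - eps%:E)%E ->
  exists x' y', x' \in ball1 w x0 /\ y' \in ball1 w y0 /\
    ((f x' - f y')%:E > dist w x' y' - (eps * (10 * D / q))%:E)%E /\
    (dist w x' y' > dist w x0 y0)%E.
Proof.
move=> [w0 [wsym [wdiag m0]]] lf HD Hqm q0 Hk Hharm Hgn eps0 epsq x0y0 Hd.
have qq0 : forall x y, 0 <= qq w m x y by move=> x y; rewrite /qq divr_ge0 // ltW.
have Hq : forall x y, adj w x y -> q <= qq w m x y.
  move=> x y h; rewrite -lee_fin -Hqm; apply: ereal_inf_lbound; by exists (x, y).
have HDeg : forall x, Deg w m x <= D.
  move=> x; rewrite -lee_fin -HD; apply: ereal_sup_ubound; by exists x.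
have Hgradn : forall g u v, conn w u v -> (0 < dN w u v)%N ->
    grad w g u v = ((g u - g v) / (dN w u v)%:R)%:E.
  move=> g u v h hp; rewrite /grad dist_dN // inver pnatr_eq0.
  by rewrite (negbTE (lt0n_neq0 hp)) -EFinM.
have Hgrad1 : forall g u v, adj w u v -> grad w g u v = (g u - g v)%:E.
  move=> g u v h; rewrite Hgradn ?dN_adj ?divr1 //; exact: conn_adj.
have Hlipf1 : forall u v, adj w u v -> f u - f v <= 1.
  move=> u v h; rewrite -lee_fin -Hgrad1 // -Hgn; apply: ereal_sup_ubound.
  by exists (u, v).
have Hlipf : forall u v, conn w u v -> f u - f v <= (dN w u v)%:R.
  move=> u v h; exact: lip_dN wsym _ Hlipf1 _ _ h.
have Hc0 : conn w x0 y0.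
  apply: contrapT => hc; move: Hd; rewrite dist_nconn //.
set n := dN w x0 y0.
have n0 : (0 < n)%N.
  rewrite lt0n; apply/eqP => e; apply: x0y0; exact: dN_eq0 Hc0 e.
have Hdn : dist w x0 y0 = n%:R%:E by rewrite dist_dN.
have Hfd : n%:R - eps <= f x0 - f y0 by rewrite -lee_fin EFinB -Hdn.
have [x1 [Hx1a Hx1d]] : exists x1, adj w x0 x1 /\ dN w x1 y0 = n.-1.
  have := walk_rev wsym (dN_walk Hc0); rewrite -/n -[n in walk _ _ _ n](ltn_predK n0).
  move=> /walkSE [z [hz hzx]]; exists z; split.
  exact (adj_sym wsym hzx).
  apply: anti_leq; apply/andP; split.
    by apply: dN_min; exact (walk_rev wsym hz).
  have hc1 : conn w x0 z by apply: conn_adj; exact (adj_sym wsym hzx).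
  have hc2 : conn w z y0 by apply: (conn_sym wsym); exists n.-1.
  have := dN_tri hc1 hc2; rewrite -/n dN_adj //; last exact (adj_sym wsym hzx).
  by rewrite -(ltn_predK n0) add1n ltnS.
have Hmem : forall x y, y \in finmap.enum_fset (fset_set (nbhd w x)) <-> adj w x y.
  by move=> x y; rewrite (in_fset_set (lf x)) in_setE.
have Huniq : forall x, uniq (finmap.enum_fset (fset_set (nbhd w x))).
  move=> x; exact: finmap.fset_uniq.
have HLap : forall g x, Lap w m g x =
   \sum_(y <- finmap.enum_fset (fset_set (nbhd w x))) qq w m x y * (g y - g x).
  by move=> g x; rewrite /Lap fsbig_finite.
have HDegE : forall x, Deg w m x =
   \sum_(y <- finmap.enum_fset (fset_set (nbhd w x))) qq w m x y.
  by move=> x; rewrite /Deg fsbig_finite.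
have Hdeg1 : forall x y, adj w x y -> qq w m x y <= Deg w m x.
  move=> x y h; rewrite HDegE (bigD1_seq y) //=; last exact/Hmem.
  rewrite lerDl; apply: sumr_ge0 => i _; exact: qq0.
have qD : q <= D.
  apply: (le_trans (Hq _ _ Hx1a)); apply: (le_trans (Hdeg1 _ _ Hx1a)); exact: HDeg.
have D0 : 0 < D by apply: lt_le_trans qD.
set delta := n%:R - (f x0 - f y0).
have hdel0 : 0 <= delta by rewrite /delta subr_ge0; exact: Hlipf.
have hdel1 : delta <= eps by rewrite /delta; lra.
set u := eps * (D / q).
set T := eps * (10 * D / q).
have hT : T = 10 * u by rewrite /T /u !mulrA [eps * 10]mulrC.
have hr : 1 <= D / q by rewrite ler_pdivlMr // mul1r.
have heu : eps <= u by rewrite /u ler_peMr // ltW.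
have hu4 : 4 * u < 1.
  have h1 : eps * (4 * D) < q by rewrite -ltr_pdivlMr // mulr_gt0.
  have -> : 4 * u = (eps * (4 * D)) / q by rewrite /u !mulrA [4 * eps]mulrC.
  by rewrite ltr_pdivrMr // mul1r.
set lam := 3 * u.
have hlq : lam * q = 3 * (eps * D).
  by rewrite /lam /u -!mulrA mulVf ?mulr1 // lt0r_neq0.
have Hcx : forall x', (x' = x0 \/ adj w x0 x') -> conn w x0 x'.
  by move=> x' [->|h]; [exact: conn_refl | exact: conn_adj].
have Hcy : forall y', (y' = y0 \/ adj w y0 y') -> conn w y0 y'.
  by move=> y' [->|h]; [exact: conn_refl | exact: conn_adj].
have Hcxy : forall x' y', (x' = x0 \/ adj w x0 x') -> (y' = y0 \/ adj w y0 y') ->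
    conn w x' y'.
  move=> x' y' hx hy; apply: conn_trans (conn_sym wsym (Hcx _ hx)) _.
  exact: conn_trans Hc0 (Hcy _ hy).
have dN1x : forall x', (x' = x0 \/ adj w x0 x') -> (dN w x0 x' <= 1)%N.
  by move=> x' [->|h]; [rewrite dN0 | rewrite dN_adj].
have dN1y : forall y', (y' = y0 \/ adj w y0 y') -> (dN w y0 y' <= 1)%N.
  by move=> y' [->|h]; [rewrite dN0 | rewrite dN_adj].
apply: contrapT => Hn.
have HC : forall x' y', (x' = x0 \/ adj w x0 x') -> (y' = y0 \/ adj w y0 y') ->
    (n < dN w x' y')%N -> f x' - f y' <= (dN w x' y')%:R - T.
  move=> x' y' hx hy hlt; rewrite leNgt; apply/negP => hgt; apply: Hn.
  exists x', y'; split; [|split; [|split]].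
  - rewrite in_setE /ball1 /= dist_dN; last exact: Hcx.
    by rewrite lee_fin lern1 dN1x.
  - rewrite in_setE /ball1 /= dist_dN; last exact: Hcy.
    by rewrite lee_fin lern1 dN1y.
  - rewrite dist_dN; last exact: Hcxy.
    by rewrite -EFinB lte_fin.
  - rewrite Hdn dist_dN; last exact: Hcxy.
    by rewrite lte_fin ltr_nat.
have dxy2 : forall x' y', (x' = x0 \/ adj w x0 x') -> (y' = y0 \/ adj w y0 y') ->
    (dN w x' y' <= n + 2)%N.
  move=> x' y' hx hy.
  have h1 := dN_tri (conn_sym wsym (Hcx _ hx)) (conn_trans Hc0 (Hcy _ hy)).
  have h2 := dN_tri Hc0 (Hcy _ hy).
  have h3 := dN1x _ hx; have h4 := dN1y _ hy.
  rewrite (dN_sym wsym x' x0) in h1; rewrite -/n in h2; clear -h1 h2 h3 h4; lia.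
have dx0y : forall y', (y' = y0 \/ adj w y0 y') -> (dN w x0 y' <= n + 1)%N.
  move=> y' hy; have h2 := dN_tri Hc0 (Hcy _ hy); have h4 := dN1y _ hy.
  rewrite -/n in h2; clear -h2 h4; lia.
have Hc1 : conn w x1 y0 by apply: conn_trans (conn_sym wsym (conn_adj Hx1a)) Hc0.
have dx1y : forall y', (y' = y0 \/ adj w y0 y') -> (dN w x1 y' <= n)%N.
  move=> y' hy; have h2 := dN_tri Hc1 (Hcy _ hy); have h4 := dN1y _ hy.
  rewrite Hx1d in h2; clear -h2 h4 n0; lia.
have dyx0 : forall y', (y' = y0 \/ adj w y0 y') -> (n <= dN w x0 y' + dN w y' y0)%N.
  move=> y' hy; have := dN_tri (conn_trans Hc0 (Hcy _ hy)) (conn_sym wsym (Hcy _ hy)).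
  rewrite -/n; apply: leq_trans; exact: leqnn.
have u0 : 0 < u by apply: lt_le_trans heu.
have lam0 : 0 <= lam by rewrite /lam; lra.
have lam1 : lam < 1 by rewrite /lam; lra.
have Hb : forall y', (y' = y0 \/ adj w y0 y') ->
    ((1 - lam) * (n%:R - (dN w x0 y')%:R) <= f y' - f y0 + delta) /\ (lam - 1 <= f y' - f y0).
  move=> y' hy; have hl := Hlipf _ _ (conn_trans Hc0 (Hcy _ hy)).
  case: (leqP (dN w x0 y') n) => hle.
    have hk : (dN w x0 y')%:R <= n%:R :> R by rewrite ler_nat.
    have hk' : 0 <= n%:R - (dN w x0 y')%:R :> R by rewrite subr_ge0.
    have hm := mulr_ge0 lam0 hk'.
    have hd1 := hdel1; have hd0 := hdel0; have hu := heu; have h4 := hu4.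
    rewrite /delta in hd1 hd0 *; rewrite /lam in hm *.
    clear -hl hk hm hd1 hd0 hu h4; split; lra.
  have e1 : dN w x0 y' = n.+1 by apply/eqP; rewrite eqn_leq hle -addn1 dx0y.
  have hC := HC _ _ (or_introl erefl) hy hle.
  have hd1 := hdel1; have hd0 := hdel0; have hu := heu; have h4 := hu4.
  rewrite e1 -natr1 in hC *; rewrite /delta in hd1 hd0 *; rewrite hT /lam in hC *.
  clear -hl hC hd1 hd0 hu h4; split; lra.
have hn1 : (n.-1)%:R = n%:R - 1 :> R.
  by rewrite -[in RHS](ltn_predK n0) -natr1 addrK.
have K : forall x' y', adj w x0 x' -> (y' = y0 \/ adj w y0 y') ->
    f x' - f y' - n%:R + (if x' == x1 then lam else 0) <=
    (1 - lam) * ((dN w x' y')%:R - n%:R).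
  move=> x' y' hx hy.
  have hx' : x' = x0 \/ adj w x0 x' by right.
  have hc := Hcxy _ _ hx' hy.
  have he := Hlipf _ _ hc.
  have h2 := dxy2 _ _ hx' hy.
  case: (ltngtP n (dN w x' y')) => hcmp.
  - have hC := HC _ _ hx' hy hcmp.
    have -> : (x' == x1) = false.
      apply/eqP => ex; move: (dx1y _ hy); rewrite -ex leqNgt hcmp //.
    have hk2 : (dN w x' y')%:R <= n%:R + 2 :> R by rewrite -natrD ler_nat.
    have hk1 : n%:R < (dN w x' y')%:R :> R by rewrite ltr_nat.
    have hk2' : 0 <= n%:R + 2 - (dN w x' y')%:R :> R by lra.
    have hm := mulr_ge0 lam0 hk2'.
    have hu := u0; rewrite hT /lam in hC hm *.
    clear -hC hm hk2 hk1 hu; lra.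
  - have hk : (dN w x' y')%:R + 1 <= n%:R :> R by rewrite natr1 ler_nat.
    have hk' : 0 <= n%:R - (dN w x' y')%:R - 1 :> R by lra.
    have hm := mulr_ge0 lam0 hk'.
    have hl0 := lam0.
    case: ifP => _; clear -he hm hk hl0; lra.
  - rewrite -hcmp subrr mulr0.
    case: eqP => [ex|_]; last by rewrite -hcmp in he; clear -he; lra.
    subst x'.
    have hl1 := Hlipf _ _ Hc1; rewrite Hx1d hn1 in hl1.
    have hb := (Hb _ hy).2.
    clear -hl1 hb; lra.
pose c := (1 - lam)^-1.
have lam1' : 1 - lam != 0 by rewrite subr_eq0; apply/eqP => e; move: lam1; rewrite -e ltxx.
have c0 : 0 < c by rewrite /c invr_gt0 subr_gt0.
have cl : c * (1 - lam) = 1 by rewrite /c mulVf.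
pose N := (n + 3)%N.
pose dR := fun y v : V => ((if `[< conn w y v >] then minn (dN w y v) N else N)%:R : R).
have dRE : forall y v, conn w y v -> (dN w y v <= N)%N -> dR y v = (dN w y v)%:R.
  move=> y v h hle; rewrite /dR asboolT //; congr (_%:R); exact/minn_idPl.
have dR_lip : forall y a b, adj w a b -> dR y a <= dR y b + 1.
  move=> y a b h; rewrite /dR natr1 ler_nat.
  case: (asboolP (conn w y b)) => hv.
  - have hvu : conn w b a by apply: conn_adj; exact (adj_sym wsym h).
    have hu : conn w y a by apply: conn_trans hv hvu.
    rewrite asboolT //.
    have := dN_tri hv hvu; rewrite (dN_adj wdiag (adj_sym wsym h)).
    rewrite /N => h1; clear -h1; lia.
  - by case: asboolP => _; rewrite /N; clear; lia.
pose sy := finmap.enum_fset (fset_set (nbhd w y0)).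
pose G := fun y => Num.max (c * (f y - f y0)) (n%:R - (dN w x0 y)%:R).
pose H := fun v => foldr Num.min (G y0 + dR y0 v) [seq G y + dR y v | y <- sy].
have HHlow : forall v r, (forall y, (y = y0 \/ adj w y0 y) -> r <= G y + dR y v) ->
    r <= H v.
  move=> v r h; apply: le_foldr_min; first by apply: h; left.
  move=> z /mapP [y hy ->]; apply: h; right; exact/Hmem.
have HHup : forall v y, (y = y0 \/ adj w y0 y) -> H v <= G y + dR y v.
  move=> v y [->|hy]; first exact: foldr_min_le0.
  apply: foldr_min_le; apply: map_f; exact/Hmem.
have G0 : G y0 = 0 by rewrite /G subrr mulr0 -/n subrr maxxx.
have Gn : forall y, n%:R - (dN w x0 y)%:R <= G y.
  by move=> y; rewrite /G le_max lexx orbT.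
have Hx0 : H x0 = n%:R.
  apply/eqP; rewrite eq_le; apply/andP; split.
  - apply: le_trans (HHup x0 y0 (or_introl erefl)) _.
    rewrite G0 add0r dRE; [|exact (conn_sym wsym Hc0)|].
      by rewrite (dN_sym wsym).
    by rewrite (dN_sym wsym) -/n /N leq_addr.
  - apply: HHlow => y hy.
    have hcy : conn w y x0 by apply: (conn_sym wsym); exact: conn_trans Hc0 (Hcy _ hy).
    rewrite dRE //; last by rewrite (dN_sym wsym) /N; have := dx0y _ hy; clear; lia.
    have := Gn y; rewrite (dN_sym wsym y x0); clear; lra.
have Hy0 : H y0 = 0.
  apply/eqP; rewrite eq_le; apply/andP; split.
  - apply: le_trans (HHup y0 y0 (or_introl erefl)) _.
    by rewrite G0 add0r dRE ?dN0 //; exact: conn_refl.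
  - apply: HHlow => y hy.
    have hcy : conn w y y0 by apply: (conn_sym wsym); exact: Hcy.
    rewrite dRE //; last by rewrite (dN_sym wsym) /N; have := dN1y _ hy; clear; lia.
    have h1 := dN_tri Hc0 (Hcy _ hy).
    have h2 : (dN w x0 y)%:R <= n%:R + (dN w y y0)%:R :> R.
      by rewrite -natrD ler_nat (dN_sym wsym y y0).
    have := Gn y; clear -h2; move: (G y) => g; lra.
have HlipH : forall a b, adj w a b -> H a - H b <= 1.
  move=> a b h; suff : H a - 1 <= H b by clear; lra.
  apply: HHlow => y hy; have := HHup a y hy; have := dR_lip y a b h; clear; lra.
have Hx01 : H x0 - H x1 = 1.
  apply/eqP; rewrite eq_le; apply/andP; split; first exact: HlipH.
  have := lip_dN wsym HlipH Hc1; rewrite Hx1d hn1 Hx0 Hy0; clear; lra.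
have HgnH : grad_norm w H = 1%E.
  apply/eqP; rewrite eq_le; apply/andP; split.
  - apply: ge_ereal_sup => z [[a b] /= h <-]; rewrite Hgrad1 // lee_fin; exact: HlipH.
  - apply: le_ereal_sup_tmp; exists (grad w H x0 x1); first by exists (x0, x1).
    by rewrite Hgrad1 // Hx01.
have HgH : grad w H x0 y0 = 1%E.
  by rewrite Hgradn // -/n Hx0 Hy0 subr0 divff // pnatr_eq0 -lt0n.
have Hcurv : Lap w m H x0 <= Lap w m H y0.
  have hk := Hk _ _ (nesym x0y0).
  have : (0 <= grad w (Lap w m H) y0 x0)%E.
    apply: le_trans hk _; apply: ereal_inf_lbound; exists H; [exact: (conj HgH HgnH) | by []].
  rewrite Hgradn; first last.
  - by rewrite (dN_sym wsym).
  - exact (conn_sym wsym Hc0).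
  by rewrite lee_fin (dN_sym wsym) -/n ler_pdivlMr ?ltr0n // mul0r subr_ge0.
pose ind := fun x' : V => if x' == x1 then lam else 0.
have P1 : forall x', adj w x0 x' ->
    c * (f x' - f x0 - delta + ind x') <= H x' - H x0.
  move=> x' hx; rewrite Hx0.
  suff : n%:R + c * (f x' - f x0 - delta + ind x') <= H x'.
    by move: (H x') (c * (f x' - f x0 - delta + ind x')); clear; move=> a b; lra.
  apply: HHlow => y hy.
  have hx' : x' = x0 \/ adj w x0 x' by right.
  rewrite dRE; first last.
  - rewrite (dN_sym wsym y x') /N; have := dxy2 _ _ hx' hy; clear; lia.
  - exact (conn_sym wsym (Hcxy _ _ hx' hy)).
  rewrite (dN_sym wsym y x').
  have hK := K _ _ hx hy.
  have hKc := ler_wpM2l (ltW c0) hK; rewrite mulrA cl mul1r in hKc.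
  have hG : c * (f y - f y0) <= G y by rewrite /G le_max lexx.
  have E : c * (f x' - f x0 - delta + ind x') =
      c * (f y - f y0) + c * (f x' - f y - n%:R + ind x').
    by rewrite /delta; ring.
  rewrite E; move: hKc hG; rewrite /ind.
  move: (c * (f y - f y0)) (c * (f x' - f y - n%:R + (if x' == x1 then lam else 0))).
  move: (G y) ((dN w x' y)%:R) (n%:R); clear; move=> g dd nn a b; lra.
have P4 : forall y', adj w y0 y' -> H y' - H y0 <= c * (f y' - f y0) + c * delta.
  move=> y' hy; rewrite Hy0 subr0.
  apply: le_trans (HHup y' y' (or_intror hy)) _.
  rewrite dRE ?dN0 ?addr0; [|exact: conn_refl|by []].
  rewrite /G ge_max; apply/andP; split.
    by rewrite lerDl; apply: mulr_ge0 => //; exact: ltW.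
  have := ler_wpM2l (ltW c0) (Hb _ (or_intror hy)).1.
  by rewrite mulrA cl mul1r mulrDr.
have hsx : c * (lam * qq w m x0 x1 - delta * Deg w m x0) <= Lap w m H x0.
  rewrite HLap.
  apply: le_trans (_ : _ <= \sum_(i <- finmap.enum_fset (fset_set (nbhd w x0)))
      qq w m x0 i * (c * (f i - f x0 - delta + ind i)))  _; last first.
    rewrite big_seq [X in _ <= X]big_seq; apply: ler_sum => i hi.
    apply: (ler_wpM2l (qq0 x0 i)); apply: P1; by apply/Hmem.
  rewrite (eq_bigr (fun i => c * (qq w m x0 i * (f i - f x0)) - (c * delta) * qq w m x0 i
     + c * (qq w m x0 i * ind i))); last by move=> i _; ring.
  rewrite big_split sumrB /= -!mulr_sumr -HLap Hharm -HDegE.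
  rewrite (bigD1_seq x1) /=; [|exact/Hmem|exact: Huniq].
  rewrite big1_seq; last by move=> i /andP [hi _]; rewrite /ind (negbTE hi) mulr0.
  rewrite /ind eqxx addr0 mulr0 add0r; rewrite le_eqVlt; apply/orP; left; apply/eqP; ring.
have hsy : Lap w m H y0 <= c * delta * Deg w m y0.
  rewrite HLap.
  apply: le_trans (_ : _ <= \sum_(i <- finmap.enum_fset (fset_set (nbhd w y0)))
      qq w m y0 i * (c * (f i - f y0) + c * delta)) _.
    rewrite big_seq [X in _ <= X]big_seq; apply: ler_sum => i hi.
    apply: (ler_wpM2l (qq0 y0 i)); apply: P4; by apply/Hmem.
  rewrite (eq_bigr (fun i => c * (qq w m y0 i * (f i - f y0)) + (c * delta) * qq w m y0 i));
    last by move=> i _; ring.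
  by rewrite big_split /= -!mulr_sumr -HLap Hharm -HDegE mulr0 add0r.
have hfin : lam * qq w m x0 x1 - delta * Deg w m x0 <= delta * Deg w m y0.
  have := le_trans hsx (le_trans Hcurv hsy); by rewrite -mulrA ler_pM2l.
have h1 : lam * q <= lam * qq w m x0 x1 by apply: (ler_wpM2l lam0); apply: Hq.
have h2 : delta * Deg w m x0 <= eps * D.
  apply: le_trans (ler_wpM2l hdel0 (HDeg x0)) _; apply: ler_wpM2r hdel1; exact: ltW.
have h3 : delta * Deg w m y0 <= eps * D.
  apply: le_trans (ler_wpM2l hdel0 (HDeg y0)) _; apply: ler_wpM2r hdel1; exact: ltW.
have h4 : 0 < eps * D by apply: mulr_gt0.
rewrite hlq in h1.
move: hfin h1 h2 h3 h4.
move: (lam * qq w m x0 x1) (delta * Deg w m x0) (delta * Deg w m y0) (eps * D).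
clear; move=> a b d e; lra.
Qed.
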